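(* Let $n\ge2$, $\mathbf{q}\in\mathbb{R}^n$ and $1/n<t<1$. For $z\in\mathbb{R}$ let $\mathbf{v}(z)\in\mathbb{R}^n$ have entries $\mathbf{v}_i(z)=\max(0,\mathbf{q}_i-z)$ and let $$h(z)=\begin{cases}\sqrt t\,\|\mathbf{v}(z)\|_2+z & \text{if } z<\max_i\mathbf{q}_i,\\ z & \text{otherwise.}\end{cases}$$ Then $h$ is convex, attains its minimum on $\mathbb{R}$, and $$\max_{\mathbf{p}\in P(t)}\mathbf{p}\cdot\mathbf{q}=\min_{z\in\mathbb{R}}h(z).$$ Moreover, if $z^*$ is a minimizer of $h$ with $z^*<\max_i\mathbf{q}_i$, then $\mathbf{p}^*=\sqrt t\,\mathbf{v}(z^* )/\|\mathbf{v}(z^* )\|_2$ is a maximizer of $\mathbf{p}\cdot\mathbf{q}$ over $P(t)$; if $z^*=\max_i\mathbf{q}_i$ is a minimizer, then the vector $\mathbf{p}^*$ with $\mathbf{p}^*_i=1/|S|$ for $i\in S=\{i:\mathbf{q}_i=\max_j\mathbf{q}_j\}$ and $\mathbf{p}^*_i=0$ otherwise is a maximizer.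
   Context: $P(t)=\{\mathbf{p}\in\mathbb{R}^n:\mathbf{p}\ge0,\ \sum_i\mathbf{p}_i=1,\ \mathbf{p}\cdot\mathbf{p}\le t\}$. *)

(* Defs.v *)
From HB Require Import structures.
From mathcomp Require Import all_boot all_order all_algebra.
From mathcomp Require Import reals.
Set Implicit Arguments. Unset Strict Implicit. Unset Printing Implicit Defensive.
Import Order.TTheory GRing.Theory Num.Theory.
Local Open Scope ring_scope.

Definition dotp (R : realType) (n : nat) (p q : 'I_n -> R) : R :=
  \sum_(i < n) p i * q i.

Definition Pt (R : realType) (n : nat) (t : R) (p : 'I_n -> R) : Prop :=
  (forall i, 0 <= p i) /\ \sum_(i < n) p i = 1 /\ dotp p p <= t.

Definition vz (R : realType) (n : nat) (q : 'I_n -> R) (z : R) : 'I_n -> R :=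
  fun i => Num.max 0 (q i - z).

Definition norm2 (R : realType) (n : nat) (x : 'I_n -> R) : R :=
  Num.sqrt (dotp x x).

(* max_i q_i (meaningful for n >= 1; the seed q (inord 0) is one of the entries) *)
Definition qmax (R : realType) (n : nat) (q : 'I_n.+1 -> R) : R :=
  \big[Num.max/q ord0]_(i < n.+1) q i.

Definition hfun (R : realType) (n : nat) (t : R) (q : 'I_n.+1 -> R) (z : R) : R :=
  if z < qmax q then Num.sqrt t * norm2 (vz q z) + z else z.

Definition convex_on_R (R : realType) (f : R -> R) : Prop :=
  forall (x y lam : R), 0 <= lam <= 1 ->
    f (lam * x + (1 - lam) * y) <= lam * f x + (1 - lam) * f y.

Definition is_max_on_Pt (R : realType) (n : nat) (t : R) (q p : 'I_n -> R) : Prop :=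
  Pt t p /\ forall p', Pt t p' -> dotp p' q <= dotp p q.

(* Main.v *)
Require Import Defs.
From HB Require Import structures.
From mathcomp Require Import all_boot all_order all_algebra.
From mathcomp Require Import reals.
From mathcomp Require Import ring lra.
From mathcomp Require Import all_classical all_analysis.
Import Order.TTheory GRing.Theory Num.Theory.
Import numFieldNormedType.Exports.
Local Open Scope ring_scope.

Lemma vz_ge0 {R : realType} {n : nat} (q : 'I_n -> R) z i : 0 <= vz q z i.
Proof. by rewrite /vz le_max lexx. Qed.

Lemma vz_ge {R : realType} {n : nat} (q : 'I_n -> R) z i : q i - z <= vz q z i.
Proof. by rewrite /vz le_max lexx orbT. Qed.

Lemma vzE {R : realType} {n : nat} (q : 'I_n -> R) z i :
  vz q z i = if 0 <= q i - z then q i - z else 0.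
Proof. by rewrite /vz; case: leP. Qed.

Lemma vz_mul {R : realType} {n : nat} (q : 'I_n -> R) z i :
  vz q z i * (q i - z) = vz q z i ^+ 2.
Proof.
by rewrite vzE; case: ifP => _; rewrite ?mul0r expr2 ?mul0r.
Qed.

Lemma qmax_ge {R : realType} {n : nat} (q : 'I_n.+1 -> R) i : q i <= qmax q.
Proof.
rewrite /qmax (bigD1 i) //= le_max lexx //.
Qed.

Lemma qmax_ex {R : realType} {n : nat} (q : 'I_n.+1 -> R) : exists i, q i = qmax q.
Proof.
rewrite /qmax; apply: (big_ind (fun x => exists i, q i = x)).
- by exists ord0.
- move=> x y [i <-] [j <-]; case: leP => _; by [exists j | exists i].
- by move=> i _; exists i.
Qed.

Lemma hfunE {R : realType} {n : nat} (t : R) (q : 'I_n.+1 -> R) z :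
  hfun t q z = Num.sqrt t * norm2 (vz q z) + z.
Proof.
rewrite /hfun; case: ifP => // /negbT; rewrite -leNgt => h.
suff -> : norm2 (vz q z) = 0 by rewrite mulr0 add0r.
rewrite /norm2 /dotp big1 ?sqrtr0 // => i _.
rewrite vzE; case: ifP => h1; last by rewrite mul0r.
have : q i - z <= 0 by rewrite subr_le0 (le_trans (qmax_ge q i)).
move=> h2; have -> : q i - z = 0 by apply/eqP; rewrite eq_le h1 h2.
by rewrite mul0r.
Qed.

Lemma dotp_ge0 {R : realType} {n : nat} (a : 'I_n -> R) : 0 <= dotp a a.
Proof. by rewrite /dotp sumr_ge0 // => i _; rewrite -expr2 sqr_ge0. Qed.

Lemma CS {R : realType} {n : nat} (a b : 'I_n -> R) :
  (dotp a b) ^+ 2 <= dotp a a * dotp b b.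
Proof.
have [B0|Bpos] := eqVneq (dotp b b) 0.
  have hb : forall i, b i = 0.
    move=> i; move: B0; rewrite /dotp => /eqP; rewrite psumr_eq0; last first.
      by move=> j _; rewrite -expr2 sqr_ge0.
    by move=> /allP /(_ i (mem_index_enum _)) /=; rewrite mulf_eq0 orbb => /eqP.
  rewrite B0 mulr0 /dotp big1 ?expr0n //= => i _; by rewrite hb mulr0.
have Bp : 0 < dotp b b by rewrite lt_neqAle eq_sym Bpos dotp_ge0.
set A := dotp a a; set B := dotp b b; set C := dotp a b.
have H : 0 <= \sum_(i < n) (B * a i - C * b i) ^+ 2 by rewrite sumr_ge0 // => i _; rewrite sqr_ge0.
have E : \sum_(i < n) (B * a i - C * b i) ^+ 2 = B * (B * A - C ^+ 2).
  rewrite (eq_bigr (fun i => B ^+ 2 * (a i * a i) - 2 * B * C * (a i * b i) + C ^+ 2 * (b i * b i))); last by move=> i _; ring.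
  rewrite !big_split /= sumrN -!mulr_sumr.
  rewrite /A /B /C /dotp; ring.
have : 0 <= B * (B * A - C ^+ 2) by rewrite -E.
rewrite pmulr_rge0 // subr_ge0 => h.
by rewrite mulrC.
Qed.

Lemma norm2_ge0 {R : realType} {n : nat} (a : 'I_n -> R) : 0 <= norm2 a.
Proof. exact: sqrtr_ge0. Qed.

Lemma norm2_sq {R : realType} {n : nat} (a : 'I_n -> R) : norm2 a ^+ 2 = dotp a a.
Proof. by rewrite /norm2 sqr_sqrtr // dotp_ge0. Qed.

Lemma dot_le_norm {R : realType} {n : nat} (a b : 'I_n -> R) :
  dotp a b <= norm2 a * norm2 b.
Proof.
apply: (le_trans (ler_norm _)).
rewrite -sqrtr_sqr /norm2 -sqrtrM ?dotp_ge0 // ler_sqrt ?CS //.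
by rewrite mulr_ge0 ?dotp_ge0.
Qed.

Lemma weak {R : realType} {n : nat} (t : R) (q : 'I_n.+1 -> R) p z :
  Pt t p -> dotp p q <= hfun t q z.
Proof.
move=> [p0 [s1 pp]]; rewrite hfunE.
have E : dotp p q = dotp p (fun i => q i - z) + z.
  have -> : dotp p (fun i => q i - z) = \sum_(i < n.+1) (p i * q i - z * p i).
    by apply: eq_bigr => i _ /=; ring.
  rewrite big_split /= sumrN -mulr_sumr s1 mulr1.
  by rewrite addrNK.
have h1 : dotp p (fun i => q i - z) <= dotp p (vz q z).
  by apply: ler_sum => i _; apply: ler_wpM2l => //; apply: vz_ge.
have h2 := dot_le_norm p (vz q z).
have h3 : norm2 p <= Num.sqrt t by apply: ler_wsqrtr.
have h4 : norm2 p * norm2 (vz q z) <= Num.sqrt t * norm2 (vz q z).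
  by apply: ler_wpM2r => //; apply: norm2_ge0.
rewrite E; lra.
Qed.

Definition isminh {R : realType} {n : nat} (t : R) (q : 'I_n.+1 -> R) z :=
  forall z', hfun t q z <= hfun t q z'.

Lemma certif {R : realType} {n : nat} (t : R) (q : 'I_n.+1 -> R) p z :
  Pt t p -> dotp p q = hfun t q z -> isminh t q z /\ is_max_on_Pt t q p.
Proof.
move=> hp e; split.
  by move=> z'; rewrite -e; apply: weak.
by split => // p' hp'; rewrite e; apply: weak.
Qed.

Lemma Npos {R : realType} {n : nat} (q : 'I_n.+1 -> R) z :
  z < qmax q -> 0 < norm2 (vz q z).
Proof.
move=> hz; rewrite /norm2 sqrtr_gt0; have [i0 hi0] := qmax_ex q.
rewrite /dotp (bigD1 i0) //=.
have h : 0 < vz q z i0 by rewrite vzE hi0 subr_ge0 (ltW hz) subr_gt0.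
apply: (lt_le_trans (mulr_gt0 h h)); rewrite lerDl sumr_ge0 // => i _.
by rewrite -expr2 sqr_ge0.
Qed.

Lemma interior_cert {R : realType} {n : nat} (t : R) (q : 'I_n.+1 -> R) z :
  0 <= t -> z < qmax q ->
  Num.sqrt t * (\sum_i vz q z i) = norm2 (vz q z) ->
  Pt t (fun i => Num.sqrt t * vz q z i / norm2 (vz q z)) /\
  dotp (fun i => Num.sqrt t * vz q z i / norm2 (vz q z)) q = hfun t q z.
Proof.
move=> t0 hz e.
have Np := Npos _ _ hz; have Nn : norm2 (vz q z) != 0 by rewrite gt_eqF.
set N := norm2 (vz q z) in Np Nn e *.
set st := Num.sqrt t in e *.
set S := \sum_i vz q z i in e.
have G : dotp (vz q z) (vz q z) = N ^+ 2 by rewrite norm2_sq.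
have st0 : 0 <= st by apply: sqrtr_ge0.
have st2 : st ^+ 2 = t by rewrite sqr_sqrtr.
split; first split.
- move=> i; rewrite divr_ge0 ?mulr_ge0 ?vz_ge0 //; exact: ltW.
- split.
    by rewrite -mulr_suml -mulr_sumr -/S e divff.
  have -> : dotp (fun i => st * vz q z i / N) (fun i => st * vz q z i / N)
     = (st / N) ^+ 2 * dotp (vz q z) (vz q z).
    by rewrite /dotp mulr_sumr; apply: eq_bigr => i _; field.
  rewrite G; have -> : (st / N) ^+ 2 * N ^+ 2 = st ^+ 2 by field.
  by rewrite st2.
- rewrite hfunE -/st -/N.
  have -> : dotp (fun i => st * vz q z i / N) q
     = st / N * (dotp (vz q z) (vz q z) + z * S).
    rewrite /dotp /S mulr_sumr -big_split mulr_sumr; apply: eq_bigr => i _ /=.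
    by rewrite -[vz q z i * vz q z i]expr2 -vz_mul; field.
  rewrite G.
  have e2 : st * S = N by exact: e.
  have -> : st / N * (N ^+ 2 + z * S) = st * N + z * (st * S) / N by field.
  by rewrite e2 -mulrA divff // mulr1.
Qed.

Definition kS {R : realType} {n : nat} (q : 'I_n.+1 -> R) : R :=
  (#|[set j | q j == qmax q]|%:R).

Lemma kS_gt0 {R : realType} {n : nat} (q : 'I_n.+1 -> R) : 0 < kS q.
Proof.
rewrite /kS ltr0n; apply/card_gt0P; have [i0 hi0] := qmax_ex q.
by exists i0; rewrite inE hi0.
Qed.

Lemma sum_S {R : realType} {n : nat} (q : 'I_n.+1 -> R) (c : R) :
  \sum_i (if q i == qmax q then c else 0) = c * kS q.
Proof.
rewrite -big_mkcond /= (eq_bigl (fun i => i \in [set j | q j == qmax q])).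
  by rewrite sumr_const mulr_natr.
by move=> i; rewrite inE.
Qed.

Lemma boundary_cert {R : realType} {n : nat} (t : R) (q : 'I_n.+1 -> R) :
  1 <= t * kS q ->
  Pt t (fun i => if q i == qmax q
                  then (#|[set j | q j == qmax q]|%:R)^-1 else 0) /\
  dotp (fun i => if q i == qmax q
                  then (#|[set j | q j == qmax q]|%:R)^-1 else 0) q = hfun t q (qmax q).
Proof.
move=> ht; have kp := kS_gt0 q; have kn : kS q != 0 by rewrite gt_eqF.
rewrite -/(kS q).
split; first split.
- by move=> i; case: ifP => // _; rewrite invr_ge0 ltW.
- split; first by rewrite sum_S mulVf.
  rewrite /dotp (eq_bigr (fun i => if q i == qmax q then (kS q)^-1 * (kS q)^-1 else 0)); last first.
    by move=> i _; case: ifP => _; rewrite ?mulr0.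
  rewrite sum_S.
  have -> : (kS q)^-1 * (kS q)^-1 * kS q = (kS q)^-1 * 1 by field.
  have -> : t = (kS q)^-1 * (t * kS q) by field.
  by apply: ler_wpM2l => //; rewrite invr_ge0 ltW.
- rewrite /hfun ltxx /dotp (eq_bigr (fun i => if q i == qmax q then (kS q)^-1 * qmax q else 0)); last first.
    by move=> i _; case: ifP => [/eqP ->|_]; rewrite ?mul0r.
  by rewrite sum_S; field.
Qed.

Lemma eps_ex {R : realType} {n : nat} (q : 'I_n.+1 -> R) :
  exists eps : R, 0 < eps /\ forall i, q i != qmax q -> eps <= qmax q - q i.
Proof.
exists (\big[Num.min/1]_(i | q i != qmax q) (qmax q - q i)); split.
  apply: (big_ind (fun x => 0 < x)) => //.
    by move=> x y hx hy; rewrite lt_min hx hy.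
  move=> i hi; rewrite subr_gt0 lt_neqAle hi qmax_ge //.
move=> i hi; rewrite (bigD1 i) //=.
by rewrite ge_min lexx.
Qed.

Lemma vz_b {R : realType} {n : nat} (q : 'I_n.+1 -> R) eps :
  0 < eps -> (forall i, q i != qmax q -> eps <= qmax q - q i) ->
  forall i, vz q (qmax q - eps) i = if q i == qmax q then eps else 0.
Proof.
move=> ep he i; rewrite vzE; case: eqP => [->|/eqP hne].
  by rewrite opprB addrC subrK (ltW ep).
have := he i hne => h; case: ifP => // h0.
by apply/eqP; rewrite eq_le h0 /=; lra.
Qed.

Lemma vals_b {R : realType} {n : nat} (q : 'I_n.+1 -> R) eps :
  0 < eps -> (forall i, q i != qmax q -> eps <= qmax q - q i) ->
  \sum_i vz q (qmax q - eps) i = eps * kS q /\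
  dotp (vz q (qmax q - eps)) (vz q (qmax q - eps)) = eps ^+ 2 * kS q.
Proof.
move=> ep he; split.
  by rewrite (eq_bigr _ (fun i _ => vz_b q eps ep he i)) sum_S.
rewrite /dotp (eq_bigr (fun i => if q i == qmax q then eps ^+ 2 else 0)).
  by rewrite sum_S.
by move=> i _; rewrite (vz_b q eps ep he i); case: ifP; rewrite ?mulr0 ?expr2.
Qed.

Lemma boundary_need {R : realType} {n : nat} (t : R) (q : 'I_n.+1 -> R) :
  0 <= t -> isminh t q (qmax q) -> 1 <= t * kS q.
Proof.
move=> t0 hmin; rewrite leNgt; apply/negP => hlt.
have [eps [ep he]] := eps_ex q.
have [_ G] := vals_b q eps ep he.
have h1 := hmin (qmax q - eps).
rewrite [hfun t q (qmax q)]/hfun ltxx hfunE /norm2 G in h1.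
rewrite sqrtrM ?sqr_ge0 // sqrtr_sqr ger0_norm ?(ltW ep) // in h1.
have h2 : Num.sqrt t * Num.sqrt (kS q) < 1.
  by rewrite -sqrtrM // -sqrtr1 ltr_sqrt.
have h3 : 0 <= Num.sqrt t * Num.sqrt (kS q) by rewrite mulr_ge0 ?sqrtr_ge0.
have h4 : Num.sqrt t * (eps * Num.sqrt (kS q)) = eps * (Num.sqrt t * Num.sqrt (kS q)) by ring.
rewrite h4 in h1.
nra.
Qed.

Lemma vz_shift {R : realType} {n : nat} (q : 'I_n -> R) z d i :
  vz q (z + d) i ^+ 2 <= (vz q z i - d) ^+ 2.
Proof.
rewrite !vzE; case: ifP => h1; case: ifP => h2; rewrite ?expr2; nra.
Qed.

Lemma G_shift {R : realType} {n : nat} (q : 'I_n.+1 -> R) z d :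
  dotp (vz q (z + d)) (vz q (z + d)) <=
  dotp (vz q z) (vz q z) - 2 * d * (\sum_i vz q z i) + n.+1%:R * d ^+ 2.
Proof.
apply: (le_trans (y := \sum_(i < n.+1) (vz q z i - d) ^+ 2)).
  by apply: ler_sum => i _; rewrite -expr2 vz_shift.
rewrite (eq_bigr (fun i => vz q z i * vz q z i - 2 * d * vz q z i + d ^+ 2)); last first.
  by move=> i _; ring.
rewrite !big_split /= sumrN -mulr_sumr sumr_const card_ord /dotp.
rewrite mulr_natl; lra.
Qed.

Lemma foc {R : realType} {n : nat} (t : R) (q : 'I_n.+1 -> R) z :
  0 < t -> isminh t q z -> z < qmax q ->
  Num.sqrt t * (\sum_i vz q z i) = norm2 (vz q z).
Proof.
move=> tp hmin hz.
have Np := Npos _ _ hz.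
set N := norm2 (vz q z) in Np *.
set st := Num.sqrt t.
set S := \sum_i vz q z i.
have stp : 0 < st by rewrite sqrtr_gt0.
set K := st * n.+1%:R.
have Kp : 0 < K by rewrite mulr_gt0 // ltr0n.
have key : forall d, 0 <= 2 * d * (N - st * S) + K * d ^+ 2.
  move=> d.
  have A := hmin (z + d); rewrite !hfunE -/st -/N in A.
  set N' := norm2 (vz q (z + d)) in A.
  have N'0 : 0 <= N' by apply: norm2_ge0.
  have C := G_shift q z d; rewrite -norm2_sq -norm2_sq -/N -/N' -/S in C.
  have B : 2 * N * N' <= N ^+ 2 + N' ^+ 2.
    have := sqr_ge0 (N - N'); rewrite expr2; nra.
  have P1 : 2 * N * (st * N + z) <= 2 * N * (st * N' + (z + d)).
    by apply: ler_wpM2l => //; rewrite mulr_ge0 // ltW.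
  have P2 : st * (2 * N * N') <= st * (2 * N ^+ 2 - 2 * d * S + n.+1%:R * d ^+ 2).
    by apply: ler_wpM2l; [exact: ltW | lra].
  rewrite /K; lra.
pose c := N - st * S.
have := key (- c / K).
have -> : 2 * (- c / K) * (N - st * S) + K * (- c / K) ^+ 2 = - (c ^+ 2 / K).
  by rewrite /c; field; rewrite gt_eqF.
rewrite oppr_ge0 pmulr_lle0 ?invr_gt0 // => hc.
have : c ^+ 2 = 0 by apply/eqP; rewrite eq_le hc sqr_ge0.
move/eqP; rewrite expf_eq0 /= subr_eq0 => /eqP.
by move=> ->.
Qed.

Lemma vz_convex {R : realType} {n : nat} (q : 'I_n -> R) x y l i :
  0 <= l <= 1 ->
  vz q (l * x + (1 - l) * y) i <= l * vz q x i + (1 - l) * vz q y i.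
Proof.
move=> /andP [l0 l1]; rewrite !vzE.
case: ifP => h1; case: ifP => h2; case: ifP => h3; try nra;
  move/negbT: h2; rewrite -ltNge => h2 || idtac;
  move/negbT: h3; rewrite -ltNge => h3 || idtac; nra.
Qed.

Lemma norm2_mono {R : realType} {n : nat} (a b : 'I_n -> R) :
  (forall i, 0 <= a i <= b i) -> norm2 a <= norm2 b.
Proof.
move=> h; apply: ler_wsqrtr; apply: ler_sum => i _.
by have /andP [h1 h2] := h i; apply: ler_pM.
Qed.

Lemma norm2_comb {R : realType} {n : nat} (a b : 'I_n -> R) l m :
  0 <= l -> 0 <= m ->
  norm2 (fun i => l * a i + m * b i) <= l * norm2 a + m * norm2 b.
Proof.
move=> l0 m0.
have r0 : 0 <= l * norm2 a + m * norm2 b by rewrite addr_ge0 // mulr_ge0 // norm2_ge0.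
rewrite -(ger0_norm r0) -sqrtr_sqr /norm2 ler_sqrt ?sqr_ge0 //.
have -> : dotp (fun i => l * a i + m * b i) (fun i => l * a i + m * b i)
   = l ^+ 2 * dotp a a + 2 * l * m * dotp a b + m ^+ 2 * dotp b b.
  rewrite /dotp !mulr_sumr -!big_split /=; apply: eq_bigr => i _; ring.
have hab := dot_le_norm a b.
have Ea := norm2_sq a; have Eb := norm2_sq b.
move: hab Ea Eb r0; rewrite /norm2.
set Na := Num.sqrt (dotp a a); set Nb := Num.sqrt (dotp b b) => hab Ea Eb r0.
rewrite -Ea -Eb.
have : 2 * l * m * dotp a b <= 2 * l * m * (Na * Nb).
  by apply: ler_wpM2l => //; rewrite !mulr_ge0.
rewrite !expr2; nra.
Qed.

Lemma h_convex {R : realType} {n : nat} (t : R) (q : 'I_n.+1 -> R) :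
  0 <= t -> convex_on_R (hfun t q).
Proof.
move=> t0 x y l hl; rewrite !hfunE.
have /andP [l0 l1] := hl.
have m0 : 0 <= 1 - l by rewrite subr_ge0.
have h1 : norm2 (vz q (l * x + (1 - l) * y))
    <= norm2 (fun i => l * vz q x i + (1 - l) * vz q y i).
  apply: norm2_mono => i; rewrite vz_ge0 /=; exact: vz_convex.
have h2 := norm2_comb (vz q x) (vz q y) l (1 - l) l0 m0.
have st0 : 0 <= Num.sqrt t by apply: sqrtr_ge0.
have h3 : Num.sqrt t * norm2 (vz q (l * x + (1 - l) * y)) <=
   Num.sqrt t * (l * norm2 (vz q x) + (1 - l) * norm2 (vz q y)).
  by apply: ler_wpM2l => //; apply: le_trans h1 h2.
lra.
Qed.

Lemma cont_sum {R : realType} (I : Type) (s : seq I) (f : I -> R -> R) :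
  (forall i, continuous (f i)) -> continuous (fun z => \sum_(i <- s) f i z).
Proof.
move=> hf; elim: s => [|a s IH].
  under eq_fun do rewrite big_nil. exact: cst_continuous.
under eq_fun do rewrite big_cons.
move=> x; apply: continuousD; [exact: hf | exact: IH].
Qed.

Lemma cont_vz {R : realType} {n : nat} (q : 'I_n -> R) i :
  continuous (fun z => vz q z i).
Proof.
move=> x.
have g : {for x, continuous (fun z : R => q i - z)}.
  apply: continuousB; [exact: cst_continuous | exact: cvg_id].
have c0 : {for x, continuous (fun _ : R => (0:R))} by exact: cst_continuous.
exact: (continuous_max c0 g).
Qed.

Definition Ff {R : realType} {n : nat} (t : R) (q : 'I_n -> R) (z : R) : R :=
  t * ((\sum_i vz q z i) * (\sum_i vz q z i)) - dotp (vz q z) (vz q z).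

Lemma cont_F {R : realType} {n : nat} (t : R) (q : 'I_n -> R) : continuous (Ff t q).
Proof.
move=> x.
have h1 : continuous (fun z => \sum_i vz q z i).
  by apply: cont_sum => i; exact: cont_vz.
have h2 : continuous (fun z => \sum_i vz q z i * vz q z i).
  by apply: cont_sum => i y; exact: (continuousM (cont_vz q i y) (cont_vz q i y)).
have c0 : {for x, continuous (fun _ : R => t)} by exact: cst_continuous.
have h3 : {for x, continuous (fun z => (\sum_i vz q z i) * (\sum_i vz q z i))}.
  exact: (continuousM (h1 x) (h1 x)).
have h4 := continuousM c0 h3.
exact: (continuousB h4 (h2 x)).
Qed.

Lemma F_low {R : realType} {n : nat} (t : R) (q : 'I_n.+1 -> R) :
  0 < t -> 1 < t * n.+1%:R -> exists a0, forall z, z <= a0 -> 0 < Ff t q z.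
Proof.
move=> tp tm.
set L := - \sum_i `|q i|.
have hL : forall i, L <= q i.
  move=> i; rewrite /L (bigD1 i) //= opprD.
  have : 0 <= \sum_(j | j != i) `|q j| by rewrite sumr_ge0.
  have := ler_norm (- q i); rewrite normrN.
  lra.
set U := qmax q.
set m : R := n.+1%:R.
set w := (U - L) / (t * m - 1) + 1.
have hw : (U - L) < w * (t * m - 1).
  rewrite /w mulrDl divfK ?mul1r; last by rewrite subr_eq0 gt_eqF.
  lra.
exists (L - w) => z hz.
have w0 : 0 < w.
  have : 0 <= U - L by have := hL ord0; have := qmax_ge q ord0; rewrite -/U; lra.
  move=> h1; rewrite /w ltr_pwDr // divr_ge0 //; lra.
have hd : forall i, vz q z i = q i - z.
  move=> i; rewrite vzE; case: ifP => // h.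
  have := hL i; have : 0 <= w.
    have : 0 <= U - L by have := hL ord0; have := qmax_ge q ord0; rewrite -/U; lra.
    move=> h1; rewrite /w addr_ge0 // divr_ge0 //; lra.
  move=> h1 h2; move/negbT: h; rewrite -ltNge => h3; lra.
set X := \sum_i vz q z i.
have hX : m * (L - z) <= X.
  have -> : m * (L - z) = \sum_(i < n.+1) (L - z) by rewrite sumr_const card_ord mulr_natl.
  by apply: ler_sum => i _; rewrite hd; have := hL i; lra.
have hY : dotp (vz q z) (vz q z) <= (U - z) * X.
  rewrite /X mulr_sumr; apply: ler_sum => i _; rewrite hd.
  have := hL i; have := qmax_ge q i; rewrite -/U => h1 h2.
  have h3 : 0 <= q i - z by lra.
  by apply: (ler_wpM2r h3); lra.
have Xp : 0 < X.
  apply: lt_le_trans hX; rewrite mulr_gt0 // ?ltr0n //; lra.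
have P : 0 < t * X - (U - z).
  have : t * (m * (L - z)) <= t * X by apply: ler_wpM2l => //; exact: ltW.
  have : w * (t * m - 1) <= (L - z) * (t * m - 1).
    by apply: ler_wpM2r; lra.
  nra.
rewrite /Ff -/X.
have := mulr_gt0 Xp P; lra.
Qed.

Lemma root_ex {R : realType} {n : nat} (t : R) (q : 'I_n.+1 -> R) :
  0 < t -> 1 < t * n.+1%:R -> t * kS q < 1 ->
  exists z, z < qmax q /\ Ff t q z = 0.
Proof.
move=> tp tm tk.
have [eps [ep he]] := eps_ex q.
have [hS hG] := vals_b q eps ep he.
set b := qmax q - eps.
have Fb : Ff t q b < 0.
  rewrite /Ff hS hG.
  have kp := kS_gt0 q.
  have : 0 < eps ^+ 2 * kS q * (1 - t * kS q).
    by rewrite !mulr_gt0 ?exprn_gt0 // subr_gt0.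
  move=> h; have E : t * (eps * kS q * (eps * kS q)) - eps ^+ 2 * kS q
     = - (eps ^+ 2 * kS q * (1 - t * kS q)) by ring.
  by rewrite E oppr_lt0.
have [a0 ha0] := F_low t q tp tm.
set a := Num.min a0 b.
have Fa : 0 < Ff t q a by apply: ha0; rewrite /a ge_min lexx.
have ab : a <= b by rewrite /a ge_min lexx orbT.
have [c hc Fc] : exists2 c, c \in `[a, b] & Ff t q c = 0.
  apply: IVT => //.
    by apply: continuous_subspaceT => x; apply: cont_F.
  apply/andP; split.
    by rewrite ge_min (ltW Fb) orbT.
  by rewrite le_max (ltW Fa).
exists c; split => //.
move: hc; rewrite in_itv /= => /andP [_ hcb].
by apply: (le_lt_trans hcb); rewrite /b ltrBlDr ltrDl.
Qed.

Lemma root_to_e {R : realType} {n : nat} (t : R) (q : 'I_n.+1 -> R) z :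
  0 <= t -> Ff t q z = 0 ->
  Num.sqrt t * (\sum_i vz q z i) = norm2 (vz q z).
Proof.
move=> t0; rewrite /Ff => /eqP; rewrite subr_eq0 => /eqP E.
have S0 : 0 <= \sum_i vz q z i by apply: sumr_ge0 => i _; apply: vz_ge0.
rewrite /norm2 -E sqrtrM // -expr2 sqrtr_sqr ger0_norm //.
Qed.

Theorem mainTheorem11 (R : realType) (m : nat) (q : 'I_m.+2 -> R) (t : R)
    (ht1 : (m.+2)%:R^-1 < t) (ht2 : t < 1) :
  convex_on_R (hfun t q) /\
  (exists zmin : R, forall z : R, hfun t q zmin <= hfun t q z) /\
  (exists pmax : 'I_m.+2 -> R, is_max_on_Pt t q pmax) /\
  (forall (pmax : 'I_m.+2 -> R) (zmin : R),
      is_max_on_Pt t q pmax ->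
      (forall z : R, hfun t q zmin <= hfun t q z) ->
      dotp pmax q = hfun t q zmin) /\
  (forall zs : R, (forall z : R, hfun t q zs <= hfun t q z) ->
      zs < qmax q ->
      is_max_on_Pt t q (fun i => Num.sqrt t * vz q zs i / norm2 (vz q zs))) /\
  ((forall z : R, hfun t q (qmax q) <= hfun t q z) ->
      is_max_on_Pt t q
        (fun i => if q i == qmax q
                  then (#|[set j | q j == qmax q]|%:R)^-1 else 0)).
Proof.
have np : 0 < (m.+2)%:R :> R by rewrite ltr0n.
have tp : 0 < t by apply: lt_trans ht1; rewrite invr_gt0.
have tm : 1 < t * (m.+2)%:R.
  by rewrite -(ltr_pM2r np) mulVf ?gt_eqF in ht1.
have [p0 [z0 [hp0 e0]]] : exists p z, Pt t p /\ dotp p q = hfun t q z.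
  case: (leP 1 (t * kS q)) => hk.
    by have [hp e] := boundary_cert t q hk; exists (fun i => if q i == qmax q
                  then (#|[set j | q j == qmax q]|%:R)^-1 else 0), (qmax q).
  have [z [hz Fz]] := root_ex t q tp tm hk.
  have [hp e] := interior_cert t q z (ltW tp) hz (root_to_e t q z (ltW tp) Fz).
  by eexists; exists z; split; [exact: hp | exact: e].
have [zm pm] := certif t q p0 z0 hp0 e0.
split; first exact: h_convex t q (ltW tp).
split; first by exists z0.
split; first by exists p0.
split.
  move=> pmax zmin [hpm hpmax] hzmin; apply/eqP; rewrite eq_le weak //=.
  by rewrite (le_trans (hzmin z0)) // -e0 hpmax.
split.
  move=> zs hmin hlt; have e := foc t q zs tp hmin hlt.
  have [hp e'] := interior_cert t q zs (ltW tp) hlt e.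
  exact: (certif t q _ zs hp e').2.
move=> hmin; have := boundary_need t q (ltW tp) hmin.
move/boundary_cert => [hp e]; exact: (certif t q _ _ hp e).2.
Qed.
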